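(* Let $f(u)=\sum_{j=0}^d a_ju^j$ be a real polynomial of degree $d\ge 2$ that is convex on $(0,\infty)$, strictly convex at $1$, and satisfies $f(1)=0$ and $f'(1)=0$. Then for any two probability densities $p,q$ (w.r.t. a common $\sigma$-finite measure $\mu$) for which the power chi pseudo-distances $\chi_i^\pm(p:q)$, $2\le i\le d$, are finite, the $f$-divergence has the finite chi expansion $$ I_f(p:q)=\sum_{i=2}^d\Big(\sum_{j=i}^d a_j\binom{j}{i}\Big)\chi_i^\pm(p:q). $$ Moreover, when $p=f(x;\theta_p)$ and $q=f(x;\theta_q)$ are members of the same affine exponential family with log-normalizer $F$, these quantities are finite and $I_f(p:q)$ is given in closed form by $$ I_f(p:q)=\sum_{i=2}^d\Big(\sum_{j=i}^d a_j\binom{j}{i}\Big)\sum_{s=0}^i(-1)^{i-s}\binom{i}{s}\exp\Big(F\big((1-s)\theta_p+s\theta_q\big)-\big((1-s)F(\theta_p)+sF(\theta_q)\big)\Big). $$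
   Context: For a convex $f:(0,\infty)\to\mathbb{R}$, the $f$-divergence between densities $p,q$ w.r.t. $\mu$ is $I_f(p:q)=\int p(x)f\big(\frac{q(x)}{p(x)}\big)\,d\mu(x)$ (with the usual conventions $0f(0/0)=0$ etc.). For integer $i\ge2$, the $i$-th power chi pseudo-distance is $\chi_i^\pm(p:q)=\int\frac{(q(x)-p(x))^i}{p(x)^{i-1}}\,d\mu(x)$. An exponential family consists of densities $f(x;\theta)=\exp(t(x)^\top\theta-F(\theta)+k(x))1_{\mathcal{X}}(x)$ with natural parameter space $\Theta=\{\theta:\int\exp(t(x)^\top\theta+k(x))d\mu<\infty\}$ and log-normalizer $F(\theta)=\log\int\exp(t(x)^\top\theta+k(x))d\mu$; it is an affine exponential family when $\Theta$ is affine (closed under affine combinations, e.g. $\Theta=\mathbb{R}^D$). *)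

(* Defs.v *)
From HB Require Import structures.
From mathcomp Require Import all_boot all_order all_algebra.
From mathcomp Require Import all_classical all_reals all_analysis.
Set Implicit Arguments. Unset Strict Implicit. Unset Printing Implicit Defensive.
Import Order.TTheory GRing.Theory Num.Theory.
Import numFieldNormedType.Exports.
Local Open Scope classical_set_scope.
Local Open Scope ring_scope.

Section Defs.
Context {R : realType}.

Definition convex_on_pos (f : R -> R) : Prop :=
  forall x y t : R, 0 < x -> 0 < y -> 0 <= t <= 1 ->
    f (t * x + (1 - t) * y) <= t * f x + (1 - t) * f y.

Definition strictly_convex_at1 (f : R -> R) : Prop :=
  forall x y t : R, 0 < x -> 0 < y -> x != y -> 0 < t < 1 ->
    t * x + (1 - t) * y = 1 -> f 1 < t * f x + (1 - t) * f y.

Definition fstar0 (f : R -> R) : \bar R :=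
  lim ((fun u : R => (f u / u)%:E) @ +oo%R).

Definition fdiv_integrand (f : R -> R) (p q : R) : \bar R :=
  if 0 < p then (p * f (q / p))%:E
  else if q == 0 then 0%E else (q%:E * fstar0 f)%E.

Definition fdiv {d} {T : measurableType d} (mu : {measure set T -> \bar R})
  (f : R -> R) (p q : T -> R) : \bar R :=
  (\int[mu]_x fdiv_integrand f (p x) (q x))%E.

Definition chi_integrand (i : nat) (p q : R) : \bar R :=
  if 0 < p then ((q - p) ^+ i / p ^+ i.-1)%:E
  else if q == 0 then 0%E else +oo%E.

Definition chi_pm {d} {T : measurableType d} (mu : {measure set T -> \bar R})
  (i : nat) (p q : T -> R) : \bar R :=
  (\int[mu]_x chi_integrand i (p x) (q x))%E.

Definition chi_pm_finite {d} {T : measurableType d}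
  (mu : {measure set T -> \bar R}) (i : nat) (p q : T -> R) : Prop :=
  mu.-integrable setT (fun x => chi_integrand i (p x) (q x)).

Definition is_density {d} {T : measurableType d}
  (mu : {measure set T -> \bar R}) (p : T -> R) : Prop :=
  [/\ measurable_fun setT p, (forall x, 0 <= p x) &
      (\int[mu]_x (p x)%:E = 1)%E].

(* exponential families: t : T -> R^D sufficient statistic, k carrier term,
   X support *)
Definition dotv (D : nat) (u v : 'rV[R]_D) : R := \sum_(i < D) u 0 i * v 0 i.

Definition ef_unnorm {d} {T : measurableType d} (D : nat)
  (t : T -> 'rV[R]_D) (k : T -> R) (X : set T) (th : 'rV[R]_D) (x : T) : R :=
  \1_X x * expR (dotv (t x) th + k x).

Definition natural_params {d} {T : measurableType d}
  (mu : {measure set T -> \bar R}) (D : nat)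
  (t : T -> 'rV[R]_D) (k : T -> R) (X : set T) : set 'rV[R]_D :=
  [set th | (\int[mu]_x (ef_unnorm t k X th x)%:E < +oo)%E].

Definition lognormalizer {d} {T : measurableType d}
  (mu : {measure set T -> \bar R}) (D : nat)
  (t : T -> 'rV[R]_D) (k : T -> R) (X : set T) (th : 'rV[R]_D) : R :=
  ln (fine (\int[mu]_x (ef_unnorm t k X th x)%:E)%E).

Definition ef_density {d} {T : measurableType d}
  (mu : {measure set T -> \bar R}) (D : nat)
  (t : T -> 'rV[R]_D) (k : T -> R) (X : set T) (th : 'rV[R]_D) (x : T) : R :=
  \1_X x * expR (dotv (t x) th - lognormalizer mu t k X th + k x).

Definition affine_set (D : nat) (S : set 'rV[R]_D) : Prop :=
  forall th1 th2 (l : R), S th1 -> S th2 -> S ((1 - l) *: th1 + l *: th2).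

End Defs.

(* Main.v *)
Require Import Defs.
From HB Require Import structures.
From mathcomp Require Import all_boot all_order all_algebra.
From mathcomp Require Import all_classical all_reals all_analysis.
From mathcomp Require Import ring lra.
From mathcomp Require Import measurable_realfun.
Import Order.TTheory GRing.Theory Num.Theory.
Import numFieldNormedType.Exports.
Local Open Scope classical_set_scope.
Local Open Scope ring_scope.

Lemma sum_from_i (R : pzRingType) (a : nat -> R) (i n : nat) : (i <= n)%N ->
  \sum_(i <= j < n) a j * 'C(j, i)%:R = \sum_(0 <= j < n) a j * 'C(j, i)%:R.
Proof.
move=> hin; rewrite (big_cat_nat (leq0n i) hin) /= [X in _ = X + _]big1_seq ?add0r //.
move=> j /andP[_]; rewrite mem_index_iota => /andP[_ hj].
by rewrite bin_small // mulr0.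
Qed.

Lemma aux_mul (R : comNzRingType) (a x : R) n : a * (x *+ n) = a * n%:R * x.
Proof. by rewrite -[RHS]mulrA [_%:R * x]mulrC mulr_natr. Qed.

Lemma binom_exp (R : comNzRingType) (x : R) j :
  (x + 1) ^+ j = \sum_(0 <= i < j.+1) 'C(j, i)%:R * x ^+ i.
Proof. by rewrite exprD1n big_mkord; apply: eq_bigr => i _; rewrite mulr_natl. Qed.

Lemma taylor (R : comNzRingType) (P : {poly R}) n (hs : (size P <= n)%N) (u : R) :
  P.[u] = \sum_(0 <= i < n) (\sum_(i <= j < n) P`_j * 'C(j, i)%:R) * (u - 1) ^+ i.
Proof.
rewrite (@horner_coef_wide _ n P u hs) -(@big_mkord _ 0 +%R n xpredT (fun i => P`_i * u ^+ i)).
transitivity (\sum_(0 <= j < n) \sum_(0 <= i < n) P`_j * 'C(j, i)%:R * (u - 1) ^+ i).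
  rewrite !big_seq; apply: eq_bigr => j; rewrite mem_index_iota => /andP[_ hj].
  have -> : u ^+ j = ((u - 1) + 1) ^+ j by rewrite subrK.
  rewrite binom_exp mulr_sumr.
  rewrite (big_cat_nat (leq0n j.+1) hj) /= [X in _ = _ + X]big1_seq ?addr0.
    apply: eq_bigr => i _; rewrite mulrA; reflexivity.
  move=> i /andP[_]; rewrite mem_index_iota => /andP[hi _].
  by rewrite bin_small // mulr0 mul0r.
rewrite exchange_big_nat !big_seq; apply: eq_bigr => i; rewrite mem_index_iota => /andP[_ hi].
rewrite sum_from_i; last exact: ltnW.
rewrite mulr_suml; reflexivity.
Qed.
Lemma measurable_inv_fun (R : realType) : measurable_fun [set: R] (@GRing.inv R).
Proof.
have -> : @GRing.inv R = (fun y => if y == 0 then 0 else y^-1).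
  by apply/funext => y; case: eqP => [->|]; rewrite ?invr0.
apply: measurable_fun_if => //.
- exact: measurable_realfun.measurable_fun_eqr.
- rewrite setTI; apply: measurable_realfun.open_continuous_measurable_fun.
    have -> : (fun y : R => y == 0) @^-1` [set false] = ~` [set 0].
      by apply/seteqP; split => y /=; case: eqP.
    by rewrite openC; apply: compact_closed; [exact: Rhausdorff|exact: compact_set1].
  move=> y; rewrite inE /= => /negbT ynz; exact: inv_continuous.
Qed.

Lemma c0_eq (R : comNzRingType) (P : {poly R}) dg : size P = dg.+1 ->
  P.[1] = \sum_(0 <= j < dg.+1) P`_j * 'C(j, 0)%:R.
Proof.
move=> hs; rewrite (@taylor _ P dg.+1) ?hs // subrr big_ltn // expr0 mulr1.
rewrite [X in _ + X]big1_seq ?addr0; first reflexivity.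
move=> i /andP[_]; rewrite mem_index_iota => /andP[hi _].
by rewrite expr0n; case: i hi => // i _; rewrite mulr0.
Qed.

Lemma c1_eq (R : comNzRingType) (P : {poly R}) dg : size P = dg.+1 ->
  (P^`()).[1] = \sum_(1 <= j < dg.+1) P`_j * 'C(j, 1)%:R.
Proof.
move=> hs.
have sP : (size P^`() <= dg)%N.
  have : P != 0 by rewrite -size_poly_eq0 hs.
  by move/lt_size_deriv; rewrite hs.
rewrite (@horner_coef_wide _ dg _ 1 sP) -(@big_mkord _ 0 +%R dg xpredT (fun i => P^`()`_i * 1 ^+ i)).
rewrite big_add1 /=; apply: eq_bigr => i _.
by rewrite coef_deriv expr1n mulr1 bin1 mulr_natr.
Qed.

Lemma poly_chi (R : comNzRingType) (P : {poly R}) dg : size P = dg.+1 -> (1 <= dg)%N ->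
  P.[1] = 0 -> (P^`()).[1] = 0 -> forall u,
  P.[u] = \sum_(2 <= i < dg.+1) (\sum_(i <= j < dg.+1) P`_j * 'C(j, i)%:R) * (u - 1) ^+ i.
Proof.
move=> hs hdg h0 h1 u.
rewrite (@c0_eq _ _ _ hs) in h0; rewrite (@c1_eq _ _ _ hs) in h1.
rewrite (@taylor _ P dg.+1) ?hs // big_ltn // big_ltn ?ltnS //.
rewrite h0 h1 !mul0r !add0r; reflexivity.
Qed.

Lemma pw_chi (R : fieldType) (P : {poly R}) dg : size P = dg.+1 -> (1 <= dg)%N ->
  P.[1] = 0 -> (P^`()).[1] = 0 -> forall p q : R, p != 0 ->
  p * P.[q / p] = \sum_(2 <= i < dg.+1)
     (\sum_(i <= j < dg.+1) P`_j * 'C(j, i)%:R) * ((q - p) ^+ i / p ^+ i.-1).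
Proof.
move=> hs hdg h0 h1 p q pn0.
rewrite (@poly_chi _ _ _ hs hdg h0 h1) mulr_sumr; apply: eq_big_nat => i /andP[hi _].
case: i hi => [|[|k]] // _ /=.
have -> : q / p - 1 = (q - p) / p by field.
rewrite expr_div_n (exprS p k.+1).
have pk : p ^+ k.+1 != 0 by rewrite expf_neq0.
field; apply/andP; split => //.
Qed.

Lemma meas_fdiv_integrand (R : realType) (P : {poly R}) d (T : measurableType d)
  (p q : T -> R) : measurable_fun setT p -> measurable_fun setT q ->
  measurable_fun setT (fun x => fdiv_integrand (fun u => P.[u]) (p x) (q x)).
Proof.
move=> mp mq; rewrite /fdiv_integrand; apply: measurable_fun_ifT.
- exact: measurable_realfun.measurable_fun_ltr.
- apply/measurable_EFinP; apply: measurable_funM => //.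
  apply: (measurableT_comp (f := horner P)).
    apply: continuous_measurable_fun.
    exact: continuous_horner.
  apply: measurable_funM => //; exact: measurableT_comp (@measurable_inv_fun R) mp.
- apply: measurable_fun_ifT.
  + exact: measurable_realfun.measurable_fun_eqr.
  + exact: measurable_cst.
  + apply: emeasurable_funM; last exact: measurable_cst.
    exact/measurable_EFinP.
Qed.

Lemma partA (R : realType) (P : {poly R}) (dg : nat)
  (Hdeg : size P = dg.+1) (Hdg : (2 <= dg)%N)
  (Hf1 : P.[1] = 0) (Hdf1 : (P^`()).[1] = 0)
  d (T : measurableType d) (mu : {measure set T -> \bar R}) (p q : T -> R) :
  measurable_fun setT p -> measurable_fun setT q ->
  (forall i, (2 <= i <= dg)%N -> chi_pm_finite mu i p q) ->
  fdiv mu (fun u => P.[u]) p q =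
       (\sum_(2 <= i < dg.+1)
          (\sum_(i <= j < dg.+1) P`_j * 'C(j, i)%:R)%:E * chi_pm mu i p q)%E.
Proof.
move=> mp mq hchi.
pose g := fun i => if (2 <= i <= dg)%N then
   (fun x => ((\sum_(i <= j < dg.+1) P`_j * 'C(j, i)%:R)%:E * chi_integrand i (p x) (q x))%E)
   else (fun _ => 0%E).
have ig : forall i, mu.-integrable setT (g i).
  move=> i; rewrite /g; case: ifP => hi.
    by apply: integrableZl => //; exact: hchi.
  exact: integrable0.
have hg : forall x, (\sum_(2 <= i < dg.+1) g i x =
    \sum_(2 <= i < dg.+1) (\sum_(i <= j < dg.+1) P`_j * 'C(j, i)%:R)%:E * chi_integrand i (p x) (q x))%E.
  move=> x; apply: eq_big_nat => i /andP[h2 hi].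
  by rewrite /g ifT // h2 -ltnS.
have -> : (\sum_(2 <= i < dg.+1)
          (\sum_(i <= j < dg.+1) P`_j * 'C(j, i)%:R)%:E * chi_pm mu i p q)%E =
     (\int[mu]_x \sum_(2 <= i < dg.+1) g i x)%E.
  rewrite integral_sum //; apply: eq_big_nat => i /andP[h2 hi].
  have hi' : (2 <= i <= dg)%N by rewrite h2 -ltnS.
  rewrite /g ifT // integralZl //; exact: hchi.
rewrite /fdiv; apply: ae_eq_integral => //.
- exact: meas_fdiv_integrand.
- apply: measurable_int; exact: integrable_sum.
have h2 : (2 <= 2 <= dg)%N by rewrite leqnn Hdg.
apply: filterS (integrable_ae measurableT (hchi 2 h2)) => x hfin _.
rewrite hg /fdiv_integrand; case: ifPn => hp.
  transitivity (\sum_(2 <= i < dg.+1)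
    ((\sum_(i <= j < dg.+1) P`_j * 'C(j, i)%:R) * ((q x - p x) ^+ i / p x ^+ i.-1))%:E)%E.
    rewrite sumEFin; congr EFin.
    apply: (@pw_chi _ P dg Hdeg _ Hf1 Hdf1); first exact: ltnW.
    by rewrite gt_eqF.
  by apply: eq_big_nat => i _; rewrite /chi_integrand hp.
case: ifPn => hq.
  rewrite big1_seq // => i _; rewrite /chi_integrand (negbTE hp) hq mule0 //.
have := hfin I; rewrite /chi_integrand (negbTE hp) (negbTE hq) //.
Qed.
Lemma chi_exp (R : realType) (a b : R) (i : nat) : (0 < i)%N ->
  (expR b - expR a) ^+ i / expR a ^+ i.-1 =
  \sum_(0 <= s < i.+1) (-1) ^+ (i - s) * 'C(i, s)%:R * expR (s%:R * b + (1 - s%:R) * a).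
Proof.
move=> i0.
rewrite addrC exprDn -(@big_mkord _ 0 +%R i.+1 xpredT (fun s => (- expR a) ^+ (i - s) * expR b ^+ s *+ 'C(i, s))) mulr_suml.
apply: eq_big_nat => s /andP[_ hs].
rewrite (exprNn (expR a)) -!expRM_natl -expRN.
have hi : i%:R = i.-1%:R + 1 :> R by rewrite natr1 prednK.
have -> : s%:R * b + (1 - s%:R) * a = (i - s)%:R * a + s%:R * b + - (i.-1%:R * a).
  rewrite natrB; last by rewrite -ltnS.
  rewrite hi; ring.
rewrite !expRD -mulr_natr; ring.
Qed.

Lemma dotv_lin (R : realType) D (u a b : 'rV[R]_D) (l : R) :
  dotv u ((1 - l) *: a + l *: b) = (1 - l) * dotv u a + l * dotv u b.
Proof. rewrite /dotv !mulr_sumr -big_split; apply: eq_bigr => i _ /=; rewrite !mxE; ring. Qed.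


Lemma key_abs (R : realType) (i : nat) (b : bool) (u1 u2 kk L1 L2 : R) (e : nat -> R) :
  (0 < i)%N -> (forall s, e s = (1 - s%:R) * u1 + s%:R * u2) ->
  chi_integrand i (b%:R * expR (u1 - L1 + kk)) (b%:R * expR (u2 - L2 + kk)) =
  (\sum_(0 <= s < i.+1) ((-1) ^+ (i - s) * 'C(i, s)%:R *
     expR (- ((1 - s%:R) * L1 + s%:R * L2))) * (b%:R * expR (e s + kk)))%:E.
Proof.
move=> i0 he; rewrite /chi_integrand; case: b.
  have e1 : (true%:R : R) = 1 by [].
  rewrite !e1 !mul1r expR_gt0 /=; congr EFin.
  rewrite (@chi_exp _ _ _ _ i0); apply: eq_big_nat => s _.
  rewrite he mul1r -[RHS]mulrA -expRD; congr (_ * expR _); ring.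
have e0 : (false%:R : R) = 0 by [].
rewrite !e0 !mul0r ltxx eqxx big1 // => s _; rewrite mul0r mulr0.
reflexivity.
Qed.

Lemma key_pw (R : realType) d (T : measurableType d) (mu : {measure set T -> \bar R})
  D (t : T -> 'rV[R]_D) k X thp thq i x : (0 < i)%N ->
  chi_integrand i (ef_density mu t k X thp x) (ef_density mu t k X thq x) =
  (\sum_(0 <= s < i.+1) ((-1) ^+ (i - s) * 'C(i, s)%:R *
     expR (- ((1 - s%:R) * lognormalizer mu t k X thp + s%:R * lognormalizer mu t k X thq))) *
     ef_unnorm t k X ((1 - s%:R) *: thp + s%:R *: thq) x)%:E.
Proof.
move=> i0; rewrite /ef_density /ef_unnorm !indicE.
apply: (@key_abs _ _ _ _ _ _ _ _ (fun s => dotv (t x) ((1 - s%:R) *: thp + s%:R *: thq))) => // s.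
exact: dotv_lin.
Qed.

Section EF.
Context (R : realType) d (T : measurableType d) (mu : {measure set T -> \bar R})
  (D : nat) (t : T -> 'rV[R]_D) (k : T -> R) (X : set T).
Hypotheses (mX : measurable X) (mk : measurable_fun setT k)
  (mt : forall i : 'I_D, measurable_fun setT (fun x => t x 0 i)).

Lemma meas_dotv th : measurable_fun setT (fun x => dotv (t x) th).
Proof.
rewrite /dotv; apply: (@measurable_sum _ _ _ setT _ _ (fun i x => t x 0 i * th 0 i)) => i.
apply: measurable_funM => //; exact: measurable_cst.
Qed.

Lemma meas_unnorm th : measurable_fun setT (ef_unnorm t k X th).
Proof.
rewrite /ef_unnorm; apply: measurable_funM; first exact: measurable_indic.
apply: measurableT_comp; first exact: measurable_expR.
apply: measurable_funD => //; exact: meas_dotv.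
Qed.

Lemma meas_density th : measurable_fun setT (ef_density mu t k X th).
Proof.
rewrite /ef_density; apply: measurable_funM; first exact: measurable_indic.
apply: measurableT_comp; first exact: measurable_expR.
apply: measurable_funD => //; apply: measurable_funD; first exact: meas_dotv.
exact: measurable_cst.
Qed.

Lemma unnorm_ge0 th x : 0 <= ef_unnorm t k X th x.
Proof.
rewrite /ef_unnorm; apply: mulr_ge0; last exact: expR_ge0.
by rewrite indicE; exact: ler0n.
Qed.

Lemma int_unnorm th : natural_params mu t k X th ->
  mu.-integrable setT (fun x => (ef_unnorm t k X th x)%:E).
Proof.
move=> hth; apply/integrableP; split; first exact/measurable_EFinP/meas_unnorm.
rewrite (@eq_integral _ _ _ mu setT (fun x => (ef_unnorm t k X th x)%:E)); first exact: hth.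
by move=> x _; rewrite gee0_abs // lee_fin; exact: unnorm_ge0.
Qed.

Lemma U_zero th : mu X = 0 -> (\int[mu]_x (ef_unnorm t k X th x)%:E = 0)%E.
Proof.
move=> X0.
transitivity (\int[mu]_x (cst 0%E x))%E; last exact: integral0.
apply: ae_eq_integral => //; [exact/measurable_EFinP/meas_unnorm|].
exists X; split => // x /= hx; apply: contrapT => nX; apply: hx => _.
by rewrite /ef_unnorm indicE memNset // mul0r.
Qed.

Lemma U_pos th : mu X != 0 -> natural_params mu t k X th ->
  0 < fine (\int[mu]_x (ef_unnorm t k X th x)%:E)%E.
Proof.
move=> X0 hth.
have h0 : (0 <= \int[mu]_x (ef_unnorm t k X th x)%:E)%E.
  by apply: integral_ge0 => x _; rewrite lee_fin unnorm_ge0.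
have hf : (\int[mu]_x (ef_unnorm t k X th x)%:E)%E \is a fin_num.
  by rewrite ge0_fin_numE.
rewrite -lte_fin fineK // lt0e h0 andbT; apply/eqP => hI.
move/eqP: X0; apply.
have : ae_eq mu setT (fun x => (ef_unnorm t k X th x)%:E) (cst 0%E).
  apply/ae_eq_integral_abs => //; first exact/measurable_EFinP/meas_unnorm.
  rewrite -hI; apply: eq_integral => x _; rewrite gee0_abs // lee_fin; exact: unnorm_ge0.
case=> N [mN N0 sub].
apply: (@subset_measure0 _ _ _ mu X N mX mN _ N0) => x Xx; apply: sub => /= h.
have := h I; rewrite /ef_unnorm indicE mem_set // mul1r => -[] /eqP.
by rewrite gt_eqF // expR_gt0.
Qed.

End EF.

Lemma binom_alt (R : realType) (i : nat) : (0 < i)%N ->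
  \sum_(0 <= s < i.+1) (-1) ^+ (i - s) * 'C(i, s)%:R = 0 :> R.
Proof.
move=> i0; transitivity (((-1) + 1 : R) ^+ i); last by rewrite addNr expr0n gtn_eqF.
rewrite exprDn -(@big_mkord _ 0 +%R i.+1 xpredT (fun s => (-1) ^+ (i - s) * 1 ^+ s *+ 'C(i, s))).
apply: eq_big_nat => s _; rewrite expr1n mulr1 mulr_natr; reflexivity.
Qed.

Theorem theorem2 (R : realType) (P : {poly R}) (dg : nat)
  (Hdeg : size P = dg.+1) (Hdg : (2 <= dg)%N)
  (Hconv : convex_on_pos (fun u => P.[u]))
  (Hstrict : strictly_convex_at1 (fun u => P.[u]))
  (Hf1 : P.[1] = 0) (Hdf1 : (P^`()).[1] = 0) :
  (forall (d : measure_display) (T : measurableType d)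
          (mu : {measure set T -> \bar R}) (p q : T -> R),
     sigma_finite setT mu ->
     is_density mu p -> is_density mu q ->
     (forall i, (2 <= i <= dg)%N -> chi_pm_finite mu i p q) ->
     fdiv mu (fun u => P.[u]) p q =
       (\sum_(2 <= i < dg.+1)
          (\sum_(i <= j < dg.+1) P`_j * 'C(j, i)%:R)%:E * chi_pm mu i p q)%E)
  /\
  (forall (d : measure_display) (T : measurableType d)
          (mu : {measure set T -> \bar R}) (D : nat)
          (t : T -> 'rV[R]_D) (k : T -> R) (X : set T)
          (thp thq : 'rV[R]_D),
     sigma_finite setT mu ->
     measurable X -> measurable_fun setT k ->
     (forall i : 'I_D, measurable_fun setT (fun x => t x 0 i)) ->
     affine_set (natural_params mu t k X) ->
     natural_params mu t k X thp -> natural_params mu t k X thq ->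
     let F := lognormalizer mu t k X in
     let p := ef_density mu t k X thp in
     let q := ef_density mu t k X thq in
     (forall i, (2 <= i <= dg)%N -> chi_pm_finite mu i p q) /\
     fdiv mu (fun u => P.[u]) p q =
       (\sum_(2 <= i < dg.+1)
          (\sum_(i <= j < dg.+1) P`_j * 'C(j, i)%:R) *
          \sum_(0 <= s < i.+1) (-1) ^+ (i - s) * 'C(i, s)%:R *
             expR (F ((1 - s%:R) *: thp + s%:R *: thq)
                   - ((1 - s%:R) * F thp + s%:R * F thq)))%:E).
Proof.
split.
  move=> d T mu p q sf dp dq hchi; case: dp => mp _ _; case: dq => mq _ _.
  by apply: partA.
move=> d T mu D t k X thp thq _ mX mk mt Haff Hp Hq F p q.
have Hth s : natural_params mu t k X ((1 - s%:R) *: thp + s%:R *: thq) by apply: Haff.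
pose U s := fine (\int[mu]_x (ef_unnorm t k X ((1 - s%:R) *: thp + s%:R *: thq) x)%:E)%E.
pose c i s := (-1) ^+ (i - s) * 'C(i, s)%:R * expR (- ((1 - s%:R) * F thp + s%:R * F thq)).
have fU s : (\int[mu]_x (ef_unnorm t k X ((1 - s%:R) *: thp + s%:R *: thq) x)%:E)%E = (U s)%:E.
  rewrite /U fineK // ge0_fin_numE; first exact: Hth.
  by apply: integral_ge0 => x _; rewrite lee_fin unnorm_ge0.
have hpt i : (0 < i)%N -> forall x, chi_integrand i (p x) (q x) =
   (\sum_(0 <= s < i.+1) (c i s)%:E * (ef_unnorm t k X ((1 - s%:R) *: thp + s%:R *: thq) x)%:E)%E.
  move=> i0 x; rewrite /p /q key_pw // -sumEFin; apply: eq_bigr => s _.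
  by rewrite EFinM.
have hint i : (0 < i)%N -> chi_pm_finite mu i p q.
  move=> i0; rewrite /chi_pm_finite.
  have hI : mu.-integrable setT (fun x => \sum_(0 <= s < i.+1)
      ((c i s)%:E * (ef_unnorm t k X ((1 - s%:R) *: thp + s%:R *: thq) x)%:E))%E.
    apply: (integrable_sum measurableT) => s _; apply: integrableZl; try exact: measurableT; apply: int_unnorm => //.
  apply: (@eq_integrable _ _ _ mu setT measurableT _ _ _ hI) => x _; by rewrite hpt.
have hval i : (0 < i)%N -> chi_pm mu i p q = (\sum_(0 <= s < i.+1) c i s * U s)%:E.
  move=> i0; rewrite /chi_pm (@eq_integral _ _ _ mu setT _ _ (fun x _ => hpt i i0 x)).
  rewrite integral_sum //; last by move=> s; apply: integrableZl; try exact: measurableT; apply: int_unnorm => //.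
  rewrite -sumEFin; apply: eq_bigr => s _.
  rewrite integralZl; try exact: measurableT; first by rewrite fU EFinM. apply: int_unnorm => //.
split.
  by move=> i /andP[hi _]; apply: hint; apply: leq_trans hi.
rewrite (@partA _ P dg Hdeg Hdg Hf1 Hdf1 _ _ mu p q); first last.
- by move=> i /andP[hi _]; apply: hint; apply: leq_trans hi.
- by apply: meas_density.
- by apply: meas_density.
rewrite -sumEFin; apply: eq_big_nat => i /andP[hi _].
have i0 : (0 < i)%N by apply: leq_trans hi.
rewrite hval // -EFinM; congr EFin; congr (_ * _).
case: (eqVneq (mu X) 0) => X0.
  have FL th : F th = ln 0 by rewrite /F /lognormalizer U_zero.
  rewrite big1; last by move=> s _; rewrite /U U_zero //= mulr0.
  symmetry; apply: (etrans _ (binom_alt _ _ i0)); apply: eq_big_nat => s _.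
  rewrite !FL; set L := ln 0.
  have -> : L - ((1 - s%:R) * L + s%:R * L) = 0 by ring.
  rewrite expR0 mulr1; reflexivity.
have expF th : natural_params mu t k X th ->
    expR (F th) = fine (\int[mu]_x (ef_unnorm t k X th x)%:E)%E.
  move=> hth; rewrite /F /lognormalizer lnK //; rewrite posrE; exact: U_pos.
apply: eq_big_nat => s _.
rewrite /c expRD (expF _ (Hth s)) -/(U s).
rewrite [U s * _]mulrC mulrA; reflexivity.
Qed.
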